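(* Let $H$ be an $r$-cross-free hypergraph on $V=[n]$, and let $\emptyset$ be the hypergraph on $V$ with no hyperedges. Then $$|H\setminus \mathrm{cl}_r(\emptyset)|\le|\mathrm{cl}_r(H)\setminus\mathrm{cl}_r(\emptyset)|\le 2\,|H\setminus\mathrm{cl}_r(\emptyset)|.$$
   Context: Hypergraphs on $V$ are identified with their hyperedge sets; set differences and cardinalities are of hyperedge sets. $\mathcal K_r(n)$ is the class of hypergraphs $\mathcal E$ on $V$ satisfying: (R0) every $X\subseteq V$ with $|X|\le r$ is in $\mathcal E$; (R1) $A\in\mathcal E\Rightarrow V\setminus A\in\mathcal E$; (R2) $A,B\in\mathcal E$ and $|A\cap B|\ge r\Rightarrow A\cup B\in\mathcal E$. $\mathcal K^0_r(n)$ is the class satisfying (R0) and (R1) only. $\mathrm{cl}_r(H)$ (resp. $\mathrm{cl}^0_r(H)$) is the intersection of all hypergraphs in $\mathcal K_r(n)$ (resp. $\mathcal K^0_r(n)$) containing $H$. $A,B\subseteq V$ are $r$-orthogonal if $\mathrm{cl}_r(\{A,B\})=\mathrm{cl}^0_r(\{A,B\})$. $H$ is $r$-cross-free if every pair of its hyperedges is $r$-orthogonal. *)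

(* Defs.v *)
From mathcomp Require Import all_boot.
Set Implicit Arguments. Unset Strict Implicit. Unset Printing Implicit Defensive.

(* Ground set V = [n] is represented by 'I_n; a hypergraph on V is identified
   with its set of hyperedges, i.e. an element of {set {set 'I_n}}. *)
Notation hypergraph n := {set {set 'I_n}}.

Definition R0 (n r : nat) (E : hypergraph n) : bool :=
  [forall X : {set 'I_n}, (#|X| <= r) ==> (X \in E)].

Definition R1 (n : nat) (E : hypergraph n) : bool :=
  [forall A in E, ~: A \in E].

Definition R2 (n r : nat) (E : hypergraph n) : bool :=
  [forall A in E, forall B in E, (r <= #|A :&: B|) ==> (A :|: B \in E)].

Definition inK (n r : nat) (E : hypergraph n) : bool := [&& R0 r E, R1 E & R2 r E].
Definition inK0 (n r : nat) (E : hypergraph n) : bool := R0 r E && R1 E.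

Definition cl (n r : nat) (H : hypergraph n) : hypergraph n :=
  \bigcap_(E : hypergraph n | inK r E && (H \subset E)) E.

Definition cl0 (n r : nat) (H : hypergraph n) : hypergraph n :=
  \bigcap_(E : hypergraph n | inK0 r E && (H \subset E)) E.

Definition orthogonal (n r : nat) (A B : {set 'I_n}) : bool :=
  cl r [set A; B] == cl0 r [set A; B].

Definition cross_free (n r : nat) (H : hypergraph n) : bool :=
  [forall A in H, forall B in H, orthogonal r A B].

(* Main.v *)
Require Import Defs.
From mathcomp Require Import all_boot.
Set Implicit Arguments. Unset Strict Implicit. Unset Printing Implicit Defensive.

Section S.
Variables (n r : nat).
Implicit Types (E H : {set {set 'I_n}}) (A B X Y : {set 'I_n}).

Lemma R0P E : reflect (forall X, #|X| <= r -> X \in E) (R0 r E).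
Proof.
apply: (iffP forallP) => [h X hX|h X]; first by move/implyP: (h X); apply.
by apply/implyP; apply: h.
Qed.

Lemma R1P E : reflect (forall A, A \in E -> ~: A \in E) (R1 E).
Proof.
apply: (iffP forallP) => [h A hA|h A]; first by move/implyP: (h A); apply.
by apply/implyP; apply: h.
Qed.

Lemma R2P E : reflect (forall A B, A \in E -> B \in E -> r <= #|A :&: B| -> A :|: B \in E) (R2 r E).
Proof.
apply: (iffP forallP) => [h A B hA hB hr|h A].
  move/implyP: (h A) => /(_ hA) /forallP /(_ B) /implyP /(_ hB) /implyP; exact.
apply/implyP => hA; apply/forallP => B; apply/implyP => hB; apply/implyP; exact: h.
Qed.

Lemma cl_sub H E : inK r E -> H \subset E -> cl r H \subset E.
Proof. by move=> h1 h2; apply: bigcap_inf; rewrite h1 h2. Qed.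

Lemma cl0_sub H E : inK0 r E -> H \subset E -> cl0 r H \subset E.
Proof. by move=> h1 h2; apply: bigcap_inf; rewrite h1 h2. Qed.

Lemma sub_cl H : H \subset cl r H.
Proof. by apply/bigcapsP => E /andP[]. Qed.

Lemma cl_inK H : inK r (cl r H).
Proof.
apply/and3P; split.
- apply/R0P => X hX; apply/bigcapP => E /andP[/and3P[/R0P h _ _] _]; exact: h.
- apply/R1P => A /bigcapP hA; apply/bigcapP => E hE.
  case/andP: (hE) => /and3P[_ /R1P h _] _; exact: h (hA _ hE).
- apply/R2P => A B /bigcapP hA /bigcapP hB hr; apply/bigcapP => E hE.
  case/andP: (hE) => /and3P[_ _ /R2P h] _; exact: h (hA _ hE) (hB _ hE) hr.
Qed.

Lemma C0_sub H : cl r set0 \subset cl r H.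
Proof. by apply: cl_sub; [apply: cl_inK | apply: sub0set]. Qed.

Definition Sm : {set {set 'I_n}} := [set X : {set 'I_n} | (#|X| <= r) || (#|~: X| <= r)].

Lemma Sm_sub E : inK0 r E -> Sm \subset E.
Proof.
case/andP => /R0P h0 /R1P h1; apply/subsetP => X; rewrite inE => /orP[/h0 //|/h0/h1].
by rewrite setCK.
Qed.

Definition G X Y : {set {set 'I_n}} := [set X; Y; ~: X; ~: Y] :|: Sm.

Lemma G_inK0 X Y : inK0 r (G X Y).
Proof.
apply/andP; split.
- by apply/R0P => Z hZ; rewrite !inE hZ !orbT.
- apply/R1P => A; rewrite !inE setCK.
  have e : forall U V : {set 'I_n}, (~: U == V) = (U == ~: V).
    by move=> U V; apply/eqP/eqP => h; [rewrite -h setCK | rewrite h setCK].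
  rewrite !e !setCK.
  by case/or3P => [/orP[/orP[/orP[]|]|]||] ->; rewrite ?orbT ?orTb.

Qed.

Lemma cl_pair X Y : orthogonal r X Y -> cl r [set X; Y] \subset G X Y.
Proof.
move/eqP => ->; apply: cl0_sub; first exact: G_inK0.
by apply/subsetP => Z; rewrite !inE => /orP[]->; rewrite ?orbT.
Qed.

Definition F H : {set {set 'I_n}} := H :|: [set ~: X | X in H] :|: cl r set0.

Lemma F_wit H Z : Z \in H :|: [set ~: X | X in H] -> exists2 X, X \in H & (Z == X) || (Z == ~: X).
Proof.
case/setUP => [h|/imsetP[X hX ->]]; [exists Z|exists X] => //; by rewrite eqxx ?orbT.
Qed.

Lemma in_cl_pair X Y Z : (Z == X) || (Z == ~: X) -> Z \in cl r [set X; Y].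
Proof.
case: (and3P (cl_inK [set X; Y])) => _ /R1P h1 _.
have hX : X \in cl r [set X; Y] by apply: (subsetP (sub_cl _)); rewrite !inE eqxx.
by case/orP => /eqP ->; [|apply: h1].
Qed.

Lemma F_inK H : cross_free r H -> inK r (F H).
Proof.
move=> /forallP cf.
have C0K := cl_inK (set0 : {set {set 'I_n}}).
case: (and3P C0K) => /R0P C00 /R1P C01 /R2P C02.
apply/and3P; split.
- by apply/R0P => X hX; rewrite inE C00 ?orbT.
- apply/R1P => A; rewrite !inE => /orP[/orP[h|/imsetP[X hX ->]]|h].
  + by rewrite imset_f ?orbT.
  + by rewrite setCK hX.
  + by rewrite C01 ?orbT.
- apply/R2P => A B hA hB hr.
  have orth : forall X Y, X \in H -> Y \in H -> orthogonal r X Y.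
    by move=> X Y hX hY; move/implyP: (cf X) => /(_ hX) /forallP /(_ Y) /implyP; apply.
  have key : forall X Y, X \in H -> Y \in H -> A \in cl r [set X; Y] -> B \in cl r [set X; Y] -> A :|: B \in F H.
    move=> X Y hX hY hA' hB'.
    case: (and3P (cl_inK [set X; Y])) => _ _ /R2P h2.
    move: (subsetP (cl_pair (orth X Y hX hY)) _ (h2 _ _ hA' hB' hr)).
    move/setUP => [|hS]; last first.
      have C0K0 : inK0 r (cl r (set0 : {set {set 'I_n}})) by case/and3P: C0K => h0 h1 _; rewrite /inK0; apply/andP; split; [exact: h0|exact: h1].
      by rewrite inE (subsetP (Sm_sub C0K0)) ?orbT.
    rewrite !inE => /orP[/orP[/orP[]|]|] /eqP-> ;
      by rewrite ?hX ?hY ?imset_f ?orbT.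
  case/setUP: hA => [/F_wit[X hX eA]|hA]; case/setUP: hB => [/F_wit[Y hY eB]|hB].
  - apply: (key X Y hX hY); first exact: in_cl_pair.
    by rewrite setUC; apply: in_cl_pair.
  - apply: (key X X hX hX); first exact: in_cl_pair.
    exact: (subsetP (C0_sub _)).
  - apply: (key Y Y hY hY); last exact: in_cl_pair.
    exact: (subsetP (C0_sub _)).
  - by rewrite inE C02 ?orbT.
Qed.

Lemma cl_F H : cross_free r H -> cl r H \subset F H.
Proof.
move=> cf; apply: cl_sub; first exact: F_inK.
by apply/subsetP => X hX; rewrite !inE hX.
Qed.
End S.

Theorem mainTheorem17 (n r : nat) (H : {set {set 'I_n}}) :
  cross_free r H ->
  #|H :\: cl r set0| <= #|cl r H :\: cl r set0| /\
  #|cl r H :\: cl r set0| <= 2 * #|H :\: cl r set0|.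
Proof.
move=> cf; split.
  by apply: subset_leq_card; apply: setSD; apply: sub_cl.
set C0 := cl r set0.
have C01 : forall A, (~: A \in C0) = (A \in C0).
  case/and3P: (cl_inK r (set0 : {set {set 'I_n}})) => _ /R1P h _.
  move=> A; apply/idP/idP => hA; last exact: h.
  by rewrite -(setCK A); apply: h.
have sub : cl r H :\: C0 \subset (H :\: C0) :|: [set ~: X | X in H :\: C0].
  apply/subsetP => Z /setDP[hZ nZ].
  move: (subsetP (cl_F cf) _ hZ); rewrite !inE (negbTE nZ) orbF.
  case/orP => [->|/imsetP[X hX eZ]]; first by [].
  apply/orP; right; apply/imsetP; exists X => //.
  by rewrite inE hX -C01 -eZ nZ.
apply: leq_trans (subset_leq_card sub) _.
rewrite cardsU card_imset; last exact: setC_inj.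
by rewrite mul2n -addnn leq_subr.
Qed.
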